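(* For every $n\ge1$, $\mathcal{S}_n(0121,0132)=\mathcal{S}_n(0121,1032)=\mathcal{S}_n(0121,0132,1032)$.
   Context: An ascent sequence of length $n$ is a sequence $x_1\cdots x_n$ of non-negative integers with $x_1=0$ and $x_i\le 1+\#\{j<i-1: x_j<x_{j+1}\}$ for $1<i\le n$ (i.e. at most one more than the number of ascents among the first $i-1$ letters). A sequence $\pi$ contains a pattern $\tau$ (a sequence of non-negative integers) if some subsequence of $\pi$ is order-isomorphic to $\tau$ (same relative order, equal letters to equal letters); otherwise it avoids $\tau$. $\mathcal{S}_n(T)$ is the set of ascent sequences of length $n$ avoiding all patterns in $T$. *)

(* Defs.v *)
From mathcomp Require Import all_boot.
Set Implicit Arguments. Unset Strict Implicit. Unset Printing Implicit Defensive.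

Definition asc (s : seq nat) : nat :=
  count (fun j => nth 0 s j < nth 0 s j.+1) (iota 0 (size s).-1).

(* ascent sequence (0-indexed): s_0 = 0 and for 0 < i < size s,
   s_i <= 1 + asc (s_0 ... s_{i-1}).  The empty sequence is vacuously allowed
   (only used for n >= 1 anyway). *)
Definition is_ascent_seq (s : seq nat) : bool :=
  (if s is x :: _ then x == 0 else true) &&
  all (fun i => nth 0 s i <= (asc (take i s)).+1) (iota 1 (size s).-1).

(* order isomorphism: same length, same relative order of all pairs
   (this also forces equal letters to correspond to equal letters) *)
Definition order_iso (s t : seq nat) : bool :=
  (size s == size t) &&
  all (fun i => all (fun j => (nth 0 s i < nth 0 s j) == (nth 0 t i < nth 0 t j))
                    (iota 0 (size s)))
      (iota 0 (size s)).

Definition contains (s p : seq nat) : Prop :=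
  exists m : bitseq, size m = size s /\ order_iso (mask m s) p.

Definition avoids_all (s : seq nat) (T : seq (seq nat)) : Prop :=
  forall p, p \in T -> ~ contains s p.

Definition in_S (n : nat) (T : seq (seq nat)) (s : seq nat) : Prop :=
  [/\ size s = n, is_ascent_seq s & avoids_all s T].

(* Main.v *)
Require Import Defs.
From mathcomp Require Import all_boot zify.
From Stdlib Require Import Classical.


Lemma oiso_nth t p : order_iso t p -> forall i j, i < size t -> j < size t ->
  (nth 0 t i < nth 0 t j) = (nth 0 p i < nth 0 p j).
Proof.
move=> /andP[_ /allP H] i j hi hj.
have := H i; rewrite mem_iota add0n => /(_ hi) /allP /(_ j).
by rewrite mem_iota add0n => /(_ hj) /eqP.
Qed.

Lemma nth_oiso t p : size t = size p -> (forall i j, i < size t -> j < size t ->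
  (nth 0 t i < nth 0 t j) = (nth 0 p i < nth 0 p j)) -> order_iso t p.
Proof.
move=> hs H; apply/andP; split; first by rewrite hs.
apply/allP=> i; rewrite mem_iota add0n => hi; apply/allP => j.
rewrite mem_iota add0n => hj; apply/eqP; exact: H.
Qed.

Lemma subseq_ex (x : nat) t (s : seq nat) : subseq (x :: t) s ->
  exists i, i < size s /\ nth 0 s i = x /\ subseq t (drop i.+1 s).
Proof.
elim: s => [|y s IH] //= .
case: eqP => [->|_] h.
  by exists 0; rewrite drop0.
have [i [h1 [h2 h3]]] := IH h.
by exists i.+1.
Qed.

Lemma subseq_exk (x : nat) t (s : seq nat) k : subseq (x :: t) (drop k s) ->
  exists i, k <= i < size s /\ nth 0 s i = x /\ subseq t (drop i.+1 s).
Proof.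
move=> /subseq_ex [i [h1 [h2 h3]]].
exists (k + i); rewrite size_drop nth_drop in h1 h2 *.
rewrite drop_drop in h3. split; first lia. split=> //.
by rewrite addnC -addSn.
Qed.

Lemma subseq_mk (s : seq nat) k i (t : seq nat) : k <= i < size s -> subseq t (drop i.+1 s) ->
  subseq (nth 0 s i :: t) (drop k s).
Proof.
move=> /andP[hki his] ht.
have e : drop k s = take (i - k) (drop k s) ++ drop (i - k) (drop k s)
  by rewrite cat_take_drop.
rewrite e (drop_nth 0 (n:=i-k)); last first.
  by rewrite size_drop; lia.
rewrite nth_drop drop_drop subnKC //.
have -> : (i - k).+1 + k = i.+1 by lia.
apply: subseq_trans (suffix_subseq _ _).
by rewrite /= eqxx.
Qed.

Lemma contains4 (s p : seq nat) : size p = 4 -> contains s p <->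
  exists i j k l, [/\ i < j, j < k, k < l, l < size s &
    order_iso [:: nth 0 s i; nth 0 s j; nth 0 s k; nth 0 s l] p].
Proof.
move=> hp; split.
  move=> [m [hm ho]].
  have hs : size (mask m s) = 4 by move: ho => /andP[/eqP -> _].
  move: ho; have : subseq (mask m s) s by apply: mask_subseq.
  case: (mask m s) hs => [|w [|x [|y [|z [|]]]]] //= _ hsub ho.
  rewrite -(drop0 s) in hsub.
  have [i [hi [ei h1]]] := @subseq_exk _ _ _ _ hsub.
  have [j [hj [ej h2]]] := @subseq_exk _ _ _ _ h1.
  have [k [hk [ek h3]]] := @subseq_exk _ _ _ _ h2.
  have [l [hl [el _]]] := @subseq_exk _ _ _ _ h3.
  exists i, j, k, l; split; try lia.
  by rewrite ei ej ek el.
move=> [i [j [k [l [hij hjk hkl hl ho]]]]].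
have hsub : subseq [:: nth 0 s i; nth 0 s j; nth 0 s k; nth 0 s l] s.
  suff : subseq [:: nth 0 s i; nth 0 s j; nth 0 s k; nth 0 s l] (drop 0 s) by rewrite drop0.
  apply: subseq_mk; first lia.
  apply: subseq_mk; first lia.
  apply: subseq_mk; first lia.
  apply: subseq_mk; first lia.
  exact: sub0seq.
case/subseqP: hsub => m hm e; exists m; split => //.
by rewrite -e.
Qed.

Lemma iso1032 a b c d : order_iso [:: a; b; c; d] [:: 1; 0; 3; 2] <-> [/\ b < a, a < d & d < c].
Proof.
split.
  move=> H.
  have h1 := @oiso_nth _ _ H 1 0 erefl erefl.
  have h2 := @oiso_nth _ _ H 0 3 erefl erefl.
  have h3 := @oiso_nth _ _ H 3 2 erefl erefl.
  simpl in h1, h2, h3. split; lia.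
move=> [h1 h2 h3]; apply: nth_oiso => //.
move=> [|[|[|[|i]]]] [|[|[|[|j]]]] //= _ _; lia.
Qed.

Lemma iso0132 a b c d : order_iso [:: a; b; c; d] [:: 0; 1; 3; 2] <-> [/\ a < b, b < d & d < c].
Proof.
split.
  move=> H.
  have h1 := @oiso_nth _ _ H 0 1 erefl erefl.
  have h2 := @oiso_nth _ _ H 1 3 erefl erefl.
  have h3 := @oiso_nth _ _ H 3 2 erefl erefl.
  simpl in h1, h2, h3. split; lia.
move=> [h1 h2 h3]; apply: nth_oiso => //.
move=> [|[|[|[|i]]]] [|[|[|[|j]]]] //= _ _; lia.
Qed.

Lemma iso0121 a b c d : [/\ a < b, b < c & d = b] -> order_iso [:: a; b; c; d] [:: 0; 1; 2; 1].
Proof.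
move=> [h1 h2 h3]; apply: nth_oiso => //.
move=> [|[|[|[|i]]]] [|[|[|[|j]]]] //= _ _; lia.
Qed.

Lemma asc_cons2 x y t : asc [:: x, y & t] = (x < y) + asc (y :: t).
Proof.
rewrite /asc /=.
congr (_ + _).
rewrite -[in iota 1 _](addn0 1) iotaDl count_map.
by apply: eq_count => j.
Qed.

Lemma asc_mono (P : seq nat) : (forall i, i.+1 < size P -> nth 0 P i <= nth 0 P i.+1) ->
  asc P + nth 0 P 0 <= nth 0 P (size P).-1.
Proof.
elim: P => [|x P IH] //= H.
case: P IH H => [|y t] IH H /=; first by rewrite /asc.
rewrite asc_cons2.
have := IH (fun i hi => H i.+1 hi).
have := H 0 erefl. simpl. lia.
Qed.

Lemma asc_prop s f : is_ascent_seq s -> 0 < f < size s ->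
  nth 0 s f <= (asc (take f s)).+1.
Proof.
move=> /andP[_ /allP H] hf; apply: H.
rewrite mem_iota; lia.
Qed.

Lemma asc_head s : is_ascent_seq s -> nth 0 s 0 = 0.
Proof. by case: s => [|x s] //= /andP[/eqP]. Qed.

Lemma L1 (s : seq nat) : is_ascent_seq s -> contains s [:: 1; 0; 3; 2] -> contains s [:: 0; 1; 3; 2].
Proof.
move=> hs /(contains4 s [:: 1; 0; 3; 2] erefl) [i [j [k [l [h1 h2 h3 h4 /iso1032 [o1 o2 o3]]]]]].
apply/(contains4 s [:: 0; 1; 3; 2] erefl).
have h0 := asc_head s hs.
have hi : 0 < i by case: (posnP i) => // e; move: o1; rewrite e h0.
exists 0, i, k, l; split; try lia.
apply/iso0132; split; lia.
Qed.

Lemma L2 (s : seq nat) : is_ascent_seq s -> ~ contains s [:: 0; 1; 2; 1] ->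
  contains s [:: 0; 1; 3; 2] -> contains s [:: 1; 0; 3; 2].
Proof.
move=> hs hav /(contains4 s [:: 0; 1; 3; 2] erefl) [i [j [k [l [h1 h2 h3 h4 /iso0132 [o1 o2 o3]]]]]].
have h0 := asc_head s hs.
set c := nth 0 s l in o2 o3 *.
set d := nth 0 s k in o3 *.
set a := fun v => c <= v.
set f := find a s.
have hk : k < size s by lia.
have ha : has a s by apply/hasP; exists d; [exact: mem_nth | rewrite /a; lia].
have hfk : f <= k.
  rewrite leqNgt; apply/negP => hkf.
  have := before_find 0 hkf; rewrite /a -/d; lia.
have hf : c <= nth 0 s f by exact: (nth_find 0 ha).
have hf0 : 0 < f by case: f hf hfk => //=; lia.
have hlow : forall i, i < f -> nth 0 s i < c.
  move=> x hx; have := before_find 0 hx; rewrite /a; lia.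
case: (classic (exists x, x.+1 < f /\ nth 0 s x.+1 < nth 0 s x)) => [[x [hx1 hx2]]|hn].
  apply/(contains4 s [:: 1; 0; 3; 2] erefl).
  exists x, x.+1, k, l; split; try lia.
  apply/iso1032; split; try lia.
  have := hlow x; lia.
exfalso; apply: hav.
have hm := asc_mono (take f s).
rewrite size_takel in hm; last lia.
have hm' : asc (take f s) + nth 0 s 0 <= nth 0 s f.-1.
  rewrite -(nth_take 0 (n0:=f)); last lia.
  rewrite -[nth 0 s f.-1](nth_take 0 (n0:=f)); last lia.
  apply: hm => x hx.
  rewrite !nth_take; try lia.
  rewrite leqNgt; apply/negP => hx'; apply: hn; exists x; split => //.
have := asc_prop s f hs; move=> /(_ ltac:(lia)) hA.
have hlf := hlow f.-1 ltac:(lia).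
have hfc : nth 0 s f = c by lia.
have hfk' : f < k.
  rewrite ltn_neqAle hfk andbT; apply/eqP => e; move: hfc; rewrite e; move: o3; rewrite /d; lia.
apply/(contains4 s [:: 0; 1; 2; 1] erefl).
exists 0, f, k, l; split; try lia.
apply/iso0121; split; lia.
Qed.

Lemma equiv32 (s : seq nat) : is_ascent_seq s -> ~ contains s [:: 0; 1; 2; 1] ->
  (contains s [:: 0; 1; 3; 2] <-> contains s [:: 1; 0; 3; 2]).
Proof. by move=> hs ha; split; [exact: L2 | exact: L1]. Qed.

Theorem mainTheorem4 (n : nat) (hn : 1 <= n) :
  (forall s : seq nat,
     in_S n [:: [:: 0; 1; 2; 1]; [:: 0; 1; 3; 2]] s <->
     in_S n [:: [:: 0; 1; 2; 1]; [:: 1; 0; 3; 2]] s) /\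
  (forall s : seq nat,
     in_S n [:: [:: 0; 1; 2; 1]; [:: 1; 0; 3; 2]] s <->
     in_S n [:: [:: 0; 1; 2; 1]; [:: 0; 1; 3; 2]; [:: 1; 0; 3; 2]] s).
Proof.
split=> s; split; move=> [hsz hs hav]; split => //.
- have h1 : ~ contains s [:: 0; 1; 2; 1] by apply: hav; rewrite !inE eqxx.
  have h2 : ~ contains s [:: 0; 1; 3; 2] by apply: hav; rewrite !inE eqxx orbT.
  move=> p; rewrite !inE => /orP[/eqP -> //|/eqP ->].
  by rewrite -equiv32.
- have h1 : ~ contains s [:: 0; 1; 2; 1] by apply: hav; rewrite !inE eqxx.
  have h2 : ~ contains s [:: 1; 0; 3; 2] by apply: hav; rewrite !inE eqxx orbT.
  move=> p; rewrite !inE => /orP[/eqP -> //|/eqP ->].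
  by rewrite equiv32.
- have h1 : ~ contains s [:: 0; 1; 2; 1] by apply: hav; rewrite !inE eqxx.
  have h2 : ~ contains s [:: 1; 0; 3; 2] by apply: hav; rewrite !inE eqxx orbT.
  move=> p; rewrite !inE => /or3P[/eqP -> //|/eqP ->|/eqP -> //].
  by rewrite equiv32.
- have h1 : ~ contains s [:: 0; 1; 2; 1] by apply: hav; rewrite !inE eqxx.
  have h2 : ~ contains s [:: 1; 0; 3; 2] by apply: hav; rewrite !inE eqxx !orbT.
  move=> p; rewrite !inE => /orP[/eqP -> //|/eqP -> //].
Qed.
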